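(* Let $M/K$ be a finite extension of fields with $M$ not algebraically closed. If $M$ has a first-order model of $\mathbb{Z}$ in the language of rings augmented by finitely many parameters from $M$, then $K$ has a first-order model of $\mathbb{Z}$ in the language of rings augmented by finitely many parameters from $K$.
   Context: A first-order model of $\mathbb{Z}$ (with addition and multiplication) in a field $L$ in the language of rings with parameters is a bijection from $\mathbb{Z}$ onto a subset $D\subseteq L^d$ definable with those parameters, such that the images of the graphs of addition and multiplication are definable subsets of $D^3$. *)

(* Defs.v *)
From HB Require Import structures.
From mathcomp Require Import all_boot all_order all_algebra all_field.
Set Implicit Arguments. Unset Strict Implicit. Unset Printing Implicit Defensive.
Import GRing.Theory.
Local Open Scope ring_scope.

(* A subset of L^(k*d), given as a predicate on k-tuples of d-tuples
   (concatenated), is definable in the language of rings with parameters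
   from L if some first-order ring formula with constants from L
   (GRing.formula L) holds exactly at the concatenated tuple. *)
Definition definable1 (L : fieldType) (d : nat) (D : d.-tuple L -> Prop) :=
  exists f : GRing.formula L,
    forall x : d.-tuple L, GRing.holds (x : seq L) f <-> D x.

Definition definable3 (L : fieldType) (d : nat)
    (R : d.-tuple L -> d.-tuple L -> d.-tuple L -> Prop) :=
  exists f : GRing.formula L,
    forall x y z : d.-tuple L,
      GRing.holds ((x : seq L) ++ (y : seq L) ++ (z : seq L)) f <-> R x y z.

Definition has_Z_model (L : fieldType) : Prop :=
  exists (d : nat) (phi : int -> d.-tuple L),
    injective phi /\
    definable1 (fun x => exists n : int, x = phi n) /\
    definable3 (fun x y z => exists a b : int,
                  x = phi a /\ y = phi b /\ z = phi (a + b)%R) /\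
    definable3 (fun x y z => exists a b : int,
                  x = phi a /\ y = phi b /\ z = phi (a * b)%R).

(* Main.v *)
Require Import Defs.
From HB Require Import structures.
From mathcomp Require Import all_boot all_order all_algebra all_field.
From Stdlib Require Import Setoid.
Set Implicit Arguments. Unset Strict Implicit. Unset Printing Implicit Defensive.
Import GRing.Theory.
Local Open Scope ring_scope.

Section Weil.
Variables (K : fieldType) (M : fieldExtType K).

Local Notation n := (\dim {:M}).
Local Notation bs := (vbasis {:M}).

Lemma n_gt0 : (0 < n)%N.
Proof.
rewrite lt0n dimv_eq0; apply/negP => /eqP H.
have := memvf (1 : M); rewrite H memv0 oner_eq0; done.
Qed.

Definition crd (x : M) (j : nat) : K :=
  oapp (fun o : 'I_n => coord bs o x) 0 (insub j).

Lemma crdE (x : M) (j : 'I_n) : crd x j = coord bs j x.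
Proof. by rewrite /crd valK. Qed.

Lemma crd_out x j : (n <= j)%N -> crd x j = 0.
Proof. by move=> H; rewrite /crd insubF // ltnNge H. Qed.

Lemma crdD x y j : crd (x + y) j = crd x j + crd y j.
Proof.
case: (ltnP j n) => [jn|jn]; last by rewrite !crd_out // addr0.
by rewrite -[j]/(val (Ordinal jn)) !crdE linearD.
Qed.

Lemma crdZ a x j : crd (a *: x) j = a * crd x j.
Proof.
case: (ltnP j n) => [jn|jn]; last by rewrite !crd_out // mulr0.
by rewrite -[j]/(val (Ordinal jn)) !crdE linearZ.
Qed.

Lemma crdN x j : crd (- x) j = - crd x j.
Proof. by rewrite -scaleN1r crdZ mulN1r. Qed.

Lemma crd0 j : crd 0 j = 0.
Proof. by rewrite -(scale0r (0:M)) crdZ mul0r. Qed.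

Lemma crdMn x m j : crd (x *+ m) j = crd x j *+ m.
Proof. by elim: m => [|m IH]; rewrite ?crd0 // !mulrS crdD IH. Qed.

Lemma crd_sum (I : Type) (r : seq I) (F : I -> M) j :
  crd (\sum_(i <- r) F i) j = \sum_(i <- r) crd (F i) j.
Proof. by elim: r => [|a r IH]; rewrite ?big_nil ?crd0 // !big_cons crdD IH. Qed.

Lemma crd_expand x : x = \sum_(i < n) crd x i *: bs`_i.
Proof.
rewrite {1}(coord_vbasis (memvf x)); apply: eq_bigr => i _; by rewrite crdE.
Qed.

Lemma crd_inj x y : (forall j, (j < n)%N -> crd x j = crd y j) -> x = y.
Proof.
move=> H; rewrite (crd_expand x) (crd_expand y); apply: eq_bigr => i _.
by rewrite H.
Qed.

Definition dec_elt (f : nat -> K) : M := \sum_(i < n) f i *: bs`_i.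

Lemma crd_dec f j : (j < n)%N -> crd (dec_elt f) j = f j.
Proof.
move=> jn; rewrite -[j]/(val (Ordinal jn)) crdE /dec_elt.
exact: coord_sum_free (basis_free (vbasisP _)).
Qed.

Lemma crd_mul x y j :
  crd (x * y) j = \sum_(a < n) \sum_(b < n) (crd x a * crd y b) * crd (bs`_a * bs`_b) j.
Proof.
rewrite {1}(crd_expand x) {1}(crd_expand y) mulr_suml crd_sum.
apply: eq_bigr => a _; rewrite mulr_sumr crd_sum; apply: eq_bigr => b _.
by rewrite -scalerAl -scalerAr scalerA crdZ.
Qed.


Definition encodes (E : seq K) (e : seq M) :=
  forall k, nth 0 E k = crd (nth 0 e (k %/ n)) (k %% n).

Lemma divmod_block i j : (j < n)%N -> ((i * n + j) %/ n = i /\ (i * n + j) %% n = j)%N.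
Proof.
move=> jn; rewrite divnMDl ?n_gt0 // divn_small // addn0 modnMDl modn_small //.
Qed.

Lemma encodes_var E e i j : encodes E e -> (j < n)%N ->
  nth 0 E (i * n + j) = crd (nth 0 e i) j.
Proof. by move=> H jn; rewrite H; case: (divmod_block i jn) => -> ->. Qed.

Definition mulT (u v : nat -> GRing.term K) (j : nat) : GRing.term K :=
  \big[GRing.Add/GRing.NatConst K 0]_(a < n) \big[GRing.Add/GRing.NatConst K 0]_(b < n)
     GRing.Mul (GRing.Mul (u a) (v b)) (GRing.Const (crd (bs`_a * bs`_b) j)).

Definition oneT (j : nat) : GRing.term K := GRing.Const (crd 1 j).

Fixpoint trt (t : GRing.term M) : nat -> GRing.term K :=
  match t with
  | GRing.Var i => fun j => GRing.Var K (i * n + j)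
  | GRing.Const c => fun j => GRing.Const (crd c j)
  | GRing.NatConst m => fun j => GRing.Const (crd m%:R j)
  | GRing.Add t1 t2 => fun j => GRing.Add (trt t1 j) (trt t2 j)
  | GRing.Opp t1 => fun j => GRing.Opp (trt t1 j)
  | GRing.NatMul t1 m => fun j => GRing.NatMul (trt t1 j) m
  | GRing.Mul t1 t2 => mulT (trt t1) (trt t2)
  | GRing.Inv _ => fun _ => GRing.NatConst K 0
  | GRing.Exp t1 m => iter m (mulT (trt t1)) oneT
  end.

Lemma eval_bigAdd E (F : 'I_n -> GRing.term K) :
  GRing.eval E (\big[GRing.Add/GRing.NatConst K 0]_(a < n) F a) = \sum_(a < n) GRing.eval E (F a).
Proof.
by apply: (big_morph (GRing.eval E)) => //=; rewrite mulr0n.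
Qed.

Lemma mulT_ok E u v x y : (forall a, (a < n)%N -> GRing.eval E (u a) = crd x a) ->
  (forall a, (a < n)%N -> GRing.eval E (v a) = crd y a) ->
  forall j, GRing.eval E (mulT u v j) = crd (x * y) j.
Proof.
move=> Hu Hv j; rewrite /mulT crd_mul eval_bigAdd; apply: eq_bigr => a _.
rewrite eval_bigAdd; apply: eq_bigr => b _ /=.
by rewrite Hu // Hv.
Qed.

Lemma trt_ok E e t : GRing.rterm t -> encodes E e ->
  forall j, (j < n)%N -> GRing.eval E (trt t j) = crd (GRing.eval e t) j.
Proof.
move=> + He; elim: t => /=.
- by move=> i _ j jn; rewrite (encodes_var _ He).
- by [].
- by [].
- by move=> t1 IH1 t2 IH2 /andP[r1 r2] j jn; rewrite IH1 // IH2 // crdD.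
- by move=> t1 IH1 r1 j jn; rewrite IH1 // crdN.
- by move=> t1 IH1 m r1 j jn; rewrite IH1 // crdMn.
- move=> t1 IH1 t2 IH2 /andP[r1 r2] j jn.
  by apply: mulT_ok => a an; [apply: IH1|apply: IH2].
- by [].
- move=> t1 IH1 m r1; elim: m => [|m IHm] j jn //=.
  by rewrite exprS; apply: mulT_ok => a an; [apply: IH1|apply: IHm].
Qed.

Definition andL (F : nat -> GRing.formula K) (l : seq nat) :=
  foldr (fun j g => GRing.And (F j) g) (GRing.Bool true) l.

Lemma holds_andL E F l : GRing.holds E (andL F l) <-> (forall j, j \in l -> GRing.holds E (F j)).
Proof.
elim: l => [|a l IH] /=; first by split.
split=> [[Ha /IH Hl] j|H]; first by rewrite in_cons => /orP[/eqP->|]; auto.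
split; first by apply: H; rewrite mem_head.
by apply/IH => j jl; apply: H; rewrite in_cons jl orbT.
Qed.

Definition agree (E E' : seq K) (l : seq nat) :=
  forall k, k \notin l -> nth 0 E' k = nth 0 E k.

Lemma holds_existsL E g l : GRing.holds E (foldr (@GRing.Exists K) g l) <->
  exists E', agree E E' l /\ GRing.holds E' g.
Proof.
elim: l E => [|v l IH] E /=.
  split=> [H|[E' [HE Hg]]]; first by exists E.
  by apply: (GRing.eq_holds _ Hg) => k; rewrite HE.
split=> [[x /IH [E' [HE Hg]]]|[E' [HE Hg]]].
  exists E'; split=> // k; rewrite in_cons negb_or => /andP[kv kl].
  by rewrite HE // nth_set_nth /= (negbTE kv).
exists (nth 0 E' v); apply/IH; exists E'; split=> // k kl.
rewrite nth_set_nth /=; case: eqP => [->//|/eqP kv].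
by rewrite HE // in_cons negb_or kv.
Qed.

Lemma holds_forallL E g l : GRing.holds E (foldr (@GRing.Forall K) g l) <->
  forall E', agree E E' l -> GRing.holds E' g.
Proof.
elim: l E => [|v l IH] E /=.
  split=> [H E' HE|H]; last by apply: H.
  by apply: (GRing.eq_holds _ H) => k; rewrite HE.
split=> [H E' HE|H x].
  have := H (nth 0 E' v); move/IH; apply=> k kl.
  rewrite nth_set_nth /=; case: eqP => [->//|/eqP kv].
  by rewrite HE // in_cons negb_or kv.
apply/IH => E' HE; apply: H => k; rewrite in_cons negb_or => /andP[kv kl].
by rewrite HE // nth_set_nth /= (negbTE kv).
Qed.

Definition block i := [seq (i * n + j)%N | j <- iota 0 n].

Lemma mem_block i k : (k \in block i) = (k %/ n == i)%N.
Proof.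
apply/mapP/eqP => [[j]|<-].
  by rewrite mem_iota add0n => jn ->; case: (divmod_block i jn).
exists (k %% n)%N; first by rewrite mem_iota add0n ltn_pmod ?n_gt0.
exact: divn_eq.
Qed.

Definition enc (e : seq M) : seq K :=
  mkseq (fun k => crd (nth 0 e (k %/ n)) (k %% n)) (size e * n).

Lemma size_enc e : size (enc e) = (size e * n)%N.
Proof. by rewrite size_mkseq. Qed.

Lemma enc_encodes e : encodes (enc e) e.
Proof.
move=> k; case: (ltnP k (size e * n)) => H.
  by rewrite nth_mkseq.
rewrite nth_default ?size_enc // nth_default ?crd0 //.
by rewrite leqNgt ltn_divLR ?n_gt0 // -leqNgt.
Qed.

Lemma agree_enc E e i x : encodes E e -> agree E (enc (set_nth 0 e i x)) (block i).
Proof.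
move=> He k; rewrite mem_block => ki.
by rewrite enc_encodes He nth_set_nth /= (negbTE ki).
Qed.

Lemma encodes_agree E E' e i : encodes E e -> agree E E' (block i) ->
  encodes E' (set_nth 0 e i (dec_elt (fun j => nth 0 E' (i * n + j)))).
Proof.
move=> He HE k; rewrite nth_set_nth /=; case: eqP => [ki|/eqP ki].
  rewrite crd_dec ?ltn_pmod ?n_gt0 // -ki -divn_eq //.
by rewrite HE ?mem_block // He.
Qed.

Fixpoint trf (f : GRing.formula M) : GRing.formula K :=
  match f with
  | GRing.Bool b => GRing.Bool b
  | GRing.Equal t1 t2 => andL (fun j => GRing.Equal (trt t1 j) (trt t2 j)) (iota 0 n)
  | GRing.Unit _ => GRing.Bool false
  | GRing.And f1 f2 => GRing.And (trf f1) (trf f2)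
  | GRing.Or f1 f2 => GRing.Or (trf f1) (trf f2)
  | GRing.Implies f1 f2 => GRing.Implies (trf f1) (trf f2)
  | GRing.Not f1 => GRing.Not (trf f1)
  | GRing.Exists i f1 => foldr (@GRing.Exists K) (trf f1) (block i)
  | GRing.Forall i f1 => foldr (@GRing.Forall K) (trf f1) (block i)
  end.

Lemma trf_ok f : GRing.rformula f -> forall E e, encodes E e ->
  (GRing.holds E (trf f) <-> GRing.holds e f).
Proof.
elim: f => /=.
- by [].
- move=> t1 t2 /andP[r1 r2] E e He; rewrite holds_andL /=.
  split=> [H|H j]; last by rewrite mem_iota add0n => jn /=; rewrite !(trt_ok _ He) // H.
  apply: crd_inj => j jn; rewrite -!(trt_ok _ He) //; apply: H.
  by rewrite mem_iota.
- by [].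
- by move=> f1 IH1 f2 IH2 /andP[r1 r2] E e He; have := IH1 r1 E e He; have := IH2 r2 E e He; tauto.
- by move=> f1 IH1 f2 IH2 /andP[r1 r2] E e He; have := IH1 r1 E e He; have := IH2 r2 E e He; tauto.
- by move=> f1 IH1 f2 IH2 /andP[r1 r2] E e He; have := IH1 r1 E e He; have := IH2 r2 E e He; tauto.
- by move=> f1 IH1 r1 E e He; have := IH1 r1 E e He; tauto.
- move=> i f1 IH1 r1 E e He; rewrite holds_existsL; split.
    move=> [E' [HE Hg]]; eexists; apply/(IH1 r1 _ _ (encodes_agree He HE)); exact: Hg.
  move=> [x Hx]; exists (enc (set_nth 0 e i x)); split; first exact: agree_enc.
  by apply/(IH1 r1 _ _ (enc_encodes _)).
- move=> i f1 IH1 r1 E e He; rewrite holds_forallL; split.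
    move=> H x; apply/(IH1 r1 _ _ (enc_encodes _)); apply: H; exact: agree_enc.
  move=> H E' HE; apply/(IH1 r1 _ _ (encodes_agree He HE)); exact: H.
Qed.


Definition decs (E : seq K) (d : nat) : seq M :=
  mkseq (fun i => dec_elt (fun j => nth 0 E (i * n + j))) d.

Lemma decs_encodes (E : seq K) d : size E = (d * n)%N -> encodes E (decs E d).
Proof.
move=> sE k; case: (ltnP k (d * n)) => H.
  have kd : (k %/ n < d)%N by rewrite ltn_divLR ?n_gt0.
  rewrite nth_mkseq // crd_dec ?ltn_pmod ?n_gt0 // -divn_eq //.
rewrite nth_default ?sE // nth_default ?crd0 // size_mkseq.
by rewrite leqNgt ltn_divLR ?n_gt0 // -leqNgt.
Qed.

Lemma encodes_uniqM E e e' : encodes E e -> encodes E e' -> size e = size e' -> e = e'.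
Proof.
move=> H H' s; apply: (eq_from_nth (x0 := 0)) => // i _.
apply: crd_inj => j jn.
by rewrite -(encodes_var i H jn) (encodes_var i H' jn).
Qed.

Lemma encodes_uniqK E E' e : encodes E e -> encodes E' e -> size E = size E' -> E = E'.
Proof.
move=> H H' s; apply: (eq_from_nth (x0 := 0)) => // k _.
by rewrite H H'.
Qed.

Lemma encodes_cat E1 e1 E2 e2 : encodes E1 e1 -> size E1 = (size e1 * n)%N ->
  encodes E2 e2 -> encodes (E1 ++ E2) (e1 ++ e2).
Proof.
move=> H1 s1 H2 k; rewrite nth_cat s1; case: (ltnP k (size e1 * n)) => H.
  by rewrite H1 nth_cat ifT // ltn_divLR ?n_gt0.
rewrite H2 nth_cat ifF; last by apply/negbTE; rewrite -leqNgt leq_divRL ?n_gt0.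
have -> : k = (size e1 * n + (k - size e1 * n))%N by rewrite subnKC.
by rewrite addKn divnMDl ?n_gt0 // addKn modnMDl.
Qed.

End Weil.
Arguments decs {K M}.
Arguments decs_encodes {K M}.
Arguments n_gt0 {K M}.

Theorem proposition7p1 (K : fieldType) (M : fieldExtType K) :
  ~ GRing.closed_field_axiom M -> has_Z_model M -> has_Z_model K.
Proof.
move=> _ [d [phi [inj [[f1 H1] [[f2 H2] [f3 H3]]]]]].
have sE (x : d.-tuple M) : size (enc x) == (d * \dim {:M})%N.
  by rewrite size_enc size_tuple.
have sD (x' : (d * \dim {:M}).-tuple K) : size (@decs K M x' d) == d.
  by rewrite size_mkseq.
pose encT (x : d.-tuple M) : (d * \dim {:M}).-tuple K := Tuple (sE x).
pose decT (x' : (d * \dim {:M}).-tuple K) : d.-tuple M := Tuple (sD x').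
have dE (x' : (d * \dim {:M}).-tuple K) : encodes x' (decT x') by apply: decs_encodes; rewrite size_tuple.
have key (x' : (d * \dim {:M}).-tuple K) (y : d.-tuple M) : x' = encT y <-> decT x' = y.
  split=> [->|<-]; apply: val_inj => /=.
    apply: (encodes_uniqM (dE (encT y)) (enc_encodes y)).
    by rewrite !size_tuple.
  apply: (encodes_uniqK (dE x') (enc_encodes (decT x'))).
  by rewrite !size_tuple.
have cat3 (x y z : (d * \dim {:M}).-tuple K) :
    encodes ((x : seq K) ++ (y : seq K) ++ (z : seq K))
            ((decT x : seq M) ++ (decT y : seq M) ++ (decT z : seq M)).
  apply: encodes_cat => //; last apply: encodes_cat => //.
  - by rewrite size_tuple (eqP (sD _)).
  - by rewrite size_tuple (eqP (sD _)).
exists (d * \dim {:M})%N, (fun a => encT (phi a)); split; last split; last split.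
- move=> a b /= Hab; apply: inj.
  have ea := proj1 (key _ _) (erefl (encT (phi a))).
  have eb := proj1 (key _ _) (erefl (encT (phi b))).
  by rewrite -ea -eb /= Hab.
- exists (trf (GRing.to_rform f1)) => x.
  rewrite (trf_ok (GRing.to_rform_rformula _) (dE x)) GRing.to_rformP H1.
  by split=> [[m Hm]|[m Hm]]; exists m; apply/key.
- exists (trf (GRing.to_rform f2)) => x y z.
  rewrite (trf_ok (GRing.to_rform_rformula _) (cat3 x y z)) GRing.to_rformP H2.
  split=> [[a [b [Ha [Hb Hc]]]]|[a [b [Ha [Hb Hc]]]]]; exists a, b;
    (split; [|split]); (apply/key; assumption).
- exists (trf (GRing.to_rform f3)) => x y z.
  rewrite (trf_ok (GRing.to_rform_rformula _) (cat3 x y z)) GRing.to_rformP H3.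
  split=> [[a [b [Ha [Hb Hc]]]]|[a [b [Ha [Hb Hc]]]]]; exists a, b;
    (split; [|split]); (apply/key; assumption).
Qed.
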